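(* Consider two agents with weights $(w_1,w_2)$, where $r:=w_2/w_1\ge1$, and $m$ items with each utility $u_i(g)$ drawn independently from a PDF-bounded distribution $\mathcal{D}$. Then with probability at least $1-O(m^2/r)$, no weighted envy-free (WEF) allocation exists. The same holds for weighted proportionality (WPROP).
   Context: Utilities are additive. PDF-bounded: non-atomic with density between constants $\alpha,\beta>0$ on $[0,1]$. An allocation $(A_1,A_2)$ (partition of the items $M$) is WEF if $u_i(A_i)/w_i\ge u_i(A_j)/w_j$ for $i,j\in\{1,2\}$, and WPROP if $u_i(A_i)\ge\frac{w_i}{w_1+w_2}u_i(M)$ for $i\in\{1,2\}$. *)

(* Defs.v *)
From HB Require Import structures.
From mathcomp Require Import all_boot all_order all_algebra.
From mathcomp Require Import all_classical all_reals all_analysis.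
Set Implicit Arguments. Unset Strict Implicit. Unset Printing Implicit Defensive.
Import Order.TTheory GRing.Theory Num.Theory.
Import numFieldNormedType.Exports.
Local Open Scope classical_set_scope.
Local Open Scope ring_scope.

(* Agents are 'I_2 (agent 0 = "agent 1", agent 1 = "agent 2" of the paper);
   items are 'I_m.  An allocation (A_1,A_2) partitioning M is encoded as a
   map A : 'I_m -> 'I_2 sending each item to the agent that receives it. *)

Definition bundle_util (R : realType) (m : nat) (u : 'I_2 -> 'I_m -> R)
  (A : 'I_m -> 'I_2) (i j : 'I_2) : R :=
  \sum_(g < m | A g == j) u i g.

Definition total_util (R : realType) (m : nat) (u : 'I_2 -> 'I_m -> R)
  (i : 'I_2) : R := \sum_(g < m) u i g.

Definition WEF (R : realType) (m : nat) (w : 'I_2 -> R)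
  (u : 'I_2 -> 'I_m -> R) (A : 'I_m -> 'I_2) : Prop :=
  forall i j : 'I_2, bundle_util u A i j / w j <= bundle_util u A i i / w i.

Definition WPROP (R : realType) (m : nat) (w : 'I_2 -> R)
  (u : 'I_2 -> 'I_m -> R) (A : 'I_m -> 'I_2) : Prop :=
  forall i : 'I_2,
    w i / (w ord0 + w (lift ord0 ord0)) * total_util u i <= bundle_util u A i i.

(* mutual independence of a finite family of real random variables:
   for every family of Borel sets (taking B k = setT for the indices outside a
   subfamily gives the product rule for every subfamily) *)
Definition mutually_independent (R : realType) (d : measure_display)
  (Omega : measurableType d) (P : probability Omega R) (K : finType)
  (X : K -> Omega -> R) : Prop :=
  forall B : K -> set R, (forall k, measurable (B k)) ->
    P (\bigcap_k (X k @^-1` B k)) = (\prod_(k : K) P (X k @^-1` B k))%E.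

Definition pdf_bounded (R : realType) (alpha beta : R) (f : R -> R) : Prop :=
  measurable_fun setT f /\
  (forall x : R, 0 <= x <= 1 -> alpha <= f x <= beta) /\
  (forall x : R, ~ (0 <= x <= 1) -> f x = 0).

Definition has_density (R : realType) (d : measure_display)
  (Omega : measurableType d) (P : probability Omega R) (Y : Omega -> R)
  (f : R -> R) : Prop :=
  forall B : set R, measurable B ->
    P (Y @^-1` B) = (\int[lebesgue_measure]_(x in B) (f x)%:E)%E.

(* Main.v *)
Require Import Defs.
From HB Require Import structures.
From mathcomp Require Import all_boot all_order all_algebra.
From mathcomp Require Import all_classical all_reals all_analysis.
From mathcomp Require Import measurable_realfun.
From mathcomp Require Import lra ring.
Set Implicit Arguments. Unset Strict Implicit.
Import Order.TTheory GRing.Theory Num.Theory.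
Local Open Scope classical_set_scope.
Local Open Scope ring_scope.

Lemma dens_bound (R : realType) (alpha beta c : R) (d : measure_display)
  (Omega : measurableType d) (P : probability Omega R) (Y : Omega -> R) (f : R -> R) :
  0 < alpha -> 0 <= c -> pdf_bounded alpha beta f -> has_density P Y f ->
  (P (Y @^-1` ([set` `]-oo, c]] `|` [set` `]1%R, +oo[])) <= (beta * c)%:E)%E.
Proof.
move=> a0 c0 [mf [fin fout]] hd.
have f0 : forall x, 0 <= f x.
  move=> x; case: (pselect (0 <= x <= 1)) => h.
    by have /andP[+ _] := fin x h; apply: le_trans; apply: ltW.
  by rewrite fout.
have b0 : 0 <= beta by have /andP[+ ?] := fin 0 (ltac:(by rewrite lexx ler01)); move/(le_trans (ltW a0))/le_trans; apply.
set B := _ `|` _.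
have mB : measurable B by apply: measurableU; apply: measurable_itv.
rewrite hd //.
apply: (@le_trans _ _ (\int[lebesgue_measure]_(x in B) (beta%:E * (\1_(`[0, c]%classic : set R) x)%:E))%E).
  apply: ge0_le_integral => //.
  - by move=> x _; rewrite lee_fin.
  - by apply/measurable_EFinP; apply: measurable_funS mf.
  - apply/measurable_EFinP => /=. apply: measurable_funM; first exact: measurable_cst.
    apply: measurable_indic; exact: measurable_itv.
  move=> x Bx; rewrite -EFinM lee_fin.
  case: (pselect (0 <= x <= 1)) => h; last by rewrite fout // mulr_ge0.
  rewrite indicE mem_set ?mulr1; first by case/andP: (fin x h).
  rewrite /= in_itv /=; case/andP: h => -> x1 /=.
  by case: Bx => /=; rewrite in_itv //= => h; rewrite ltNge x1 in h.
have -> : (\int[lebesgue_measure]_(x in B) (beta%:E * (\1_(`[0, c]%classic : set R) x)%:E))%E = (beta%:E * \int[lebesgue_measure]_(x in B) (\1_(`[0, c]%classic : set R) x)%:E)%E.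
  rewrite ge0_integralZl_EFin //.
  apply: measurableT_comp => //; apply: measurable_indic; exact: measurable_itv.
rewrite (@integral_indic _ _ _ lebesgue_measure B); [|exact mB|exact: measurable_itv].
rewrite EFinM; apply: lee_wpmul2l; first by rewrite lee_fin.
apply: (@le_trans _ _ (lebesgue_measure (`[0%R, c]%classic : set R))).
  apply: le_measure; rewrite ?inE; [apply: measurableI; [exact: measurable_itv|exact mB]|exact: measurable_itv|exact: subIsetl].
rewrite lebesgue_measure_itv /=; case: ifP => _; last by rewrite lee_fin.
by rewrite sube0.
Qed.

Section Keys.
Variable R : realType.

Lemma sum_ge_one (m : nat) (F : 'I_m -> R) (P : pred 'I_m) g0 :
  (forall g, 0 <= F g) -> P g0 -> F g0 <= \sum_(g < m | P g) F g.
Proof.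
move=> F0 Pg0; rewrite (bigD1 g0) //= lerDl; apply: sumr_ge0 => g _; exact: F0.
Qed.

Lemma sum_le_m (m : nat) (F : 'I_m -> R) (P : pred 'I_m) :
  (forall g, 0 <= F g <= 1) -> \sum_(g < m | P g) F g <= m%:R.
Proof.
move=> F01; rewrite big_mkcond /=.
apply: (@le_trans _ _ (\sum_(g < m) (1 : R))).
  apply: ler_sum => g _; case: ifP => _; first by case/andP: (F01 g).
  exact: ler01.
by rewrite sumr_const card_ord.
Qed.

Lemma ord2_neq0 (x : 'I_2) : (x != ord0) = (x == lift ord0 ord0).
Proof. by case: x => [[|[|]]]. Qed.

Lemma split_total (m : nat) (F : 'I_m -> R) (A : 'I_m -> 'I_2) :
  \sum_(g < m) F g = \sum_(g < m | A g == ord0) F g + \sum_(g < m | A g == lift ord0 ord0) F g.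
Proof.
rewrite (bigID (fun g => A g == ord0)) /=; congr (_ + _).
by apply: eq_bigl => g; rewrite ord2_neq0.
Qed.

End Keys.

Section Key2.
Variable R : realType.
Local Notation a := (ord0 : 'I_2).
Local Notation b := (lift ord0 (ord0 : 'I_1) : 'I_2).

Lemma key_wef (m : nat) (w : 'I_2 -> R) (u : 'I_2 -> 'I_m -> R) (A : 'I_m -> 'I_2) (c : R) :
  (0 < m)%N -> (forall i, 0 < w i) -> 0 <= c -> c * w b = m%:R * w a ->
  (forall i g, c < u i g <= 1) -> WEF w u A -> False.
Proof.
move=> m0 w0 c0 hc hu W.
have u0 i g : 0 <= u i g <= 1.
  by case/andP: (hu i g) => h1 ->; rewrite andbT (le_trans c0 (ltW h1)).
have u0' i g : 0 <= u i g by case/andP: (u0 i g).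
case: (pickP (fun g => A g == a)) => [g Hg | H].
- have h := W b a; rewrite /bundle_util in h.
  have h1 := sum_ge_one (P := fun g => A g == a) (u0' b) Hg.
  have h2 := @sum_le_m R m (u b) (fun g => A g == b) (u0 b).
  have h3 := hu b g.
  set x := \sum_(g < m | A g == a) u b g in h h1.
  set y := \sum_(g < m | A g == b) u b g in h h2.
  have wa := w0 a; have wb := w0 b.
  case/andP: h3 => h3 _.
  have : c < x by apply: (lt_le_trans h3 h1).
  rewrite ler_pdivrMr // mulrAC ler_pdivlMr // in h.
  nra.
- have h := W a b; rewrite /bundle_util in h.
  have E : \sum_(g < m | A g == a) u a g = 0 by rewrite big_pred0.
  rewrite E mul0r in h.
  pose g0 : 'I_m := Ordinal m0.
  have h1 := sum_ge_one (P := fun g => A g == b) (u0' a) (g0 := g0).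
  rewrite -ord2_neq0 H in h1.
  have := h1 isT; have := hu a g0; have wb := w0 b.
  rewrite ler_pdivrMr // mul0r in h.
  case/andP => h3 _ h4; nra.
Qed.

Lemma key_wprop (m : nat) (w : 'I_2 -> R) (u : 'I_2 -> 'I_m -> R) (A : 'I_m -> 'I_2) (c : R) :
  (0 < m)%N -> (forall i, 0 < w i) -> 0 <= c -> c * w b = m%:R * w a ->
  (forall i g, c < u i g <= 1) -> WPROP w u A -> False.
Proof.
move=> m0 w0 c0 hc hu W.
have u0 i g : 0 <= u i g <= 1.
  by case/andP: (hu i g) => h1 ->; rewrite andbT (le_trans c0 (ltW h1)).
have u0' i g : 0 <= u i g by case/andP: (u0 i g).
have wa := w0 a; have wb := w0 b.
have wab : 0 < w a + w b by rewrite addr_gt0.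
case: (pickP (fun g => A g == a)) => [g Hg | H].
- have h := W b; rewrite /bundle_util /total_util (split_total _ A) in h.
  have h1 := sum_ge_one (P := fun g => A g == a) (u0' b) Hg.
  have h2 := @sum_le_m R m (u b) (fun g => A g == b) (u0 b).
  have h3 := hu b g.
  set x := \sum_(g < m | A g == a) u b g in h h1.
  set y := \sum_(g < m | A g == b) u b g in h h2.
  case/andP: h3 => h3 _.
  have : c < x by apply: (lt_le_trans h3 h1).
  rewrite mulrAC ler_pdivrMr // in h.
  nra.
- have h := W a; rewrite /bundle_util /total_util (split_total _ A) in h.
  have E : \sum_(g < m | A g == a) u a g = 0 by rewrite big_pred0.
  rewrite E add0r in h.
  pose g0 : 'I_m := Ordinal m0.
  have h1 := sum_ge_one (P := fun g => A g == b) (u0' a) (g0 := g0).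
  rewrite -ord2_neq0 H in h1.
  have := h1 isT; have := hu a g0.
  rewrite mulrAC ler_pdivrMr // mul0r in h.
  case/andP => h3 _ h4; nra.
Qed.

End Key2.

Section Meas.
Variables (R : realType) (d : measure_display) (Omega : measurableType d).

Lemma mle (f g : Omega -> R) : measurable_fun setT f -> measurable_fun setT g ->
  measurable [set om | f om <= g om].
Proof.
move=> mf mg; have := measurable_fun_ler mf mg measurableT (Y := [set true]) I.
by rewrite setTI.
Qed.

Lemma mforall (K : finType) (Q : K -> set Omega) : (forall k, measurable (Q k)) ->
  measurable [set om | forall k, Q k om].
Proof.
move=> mQ.
have -> : [set om | forall k, Q k om] = \bigcap_(k in [set: K]) Q k.
  by apply/seteqP; split=> om /= H k; [move=> _|]; apply: H.
by apply: fin_bigcap_measurable => //; exact: finite_finset.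
Qed.

Lemma mexists (K : finType) (Q : K -> set Omega) : (forall k, measurable (Q k)) ->
  measurable [set om | exists k, Q k om].
Proof.
move=> mQ.
have -> : [set om | exists k, Q k om] = \bigcup_(k in [set: K]) Q k.
  by apply/seteqP; split=> om /= [k H]; exists k.
by apply: fin_bigcup_measurable => //; exact: finite_finset.
Qed.

Lemma mbundle (m : nat) (X : 'I_2 * 'I_m -> Omega -> R)
  (hX : forall k, measurable_fun setT (X k)) A i j :
  measurable_fun setT (fun om => bundle_util (fun i g => X (i, g) om) A i j).
Proof.
rewrite /bundle_util.
have -> : (fun om => \sum_(g < m | A g == j) X (i, g) om) =
  (fun om => \sum_(g <- index_enum 'I_m) (fun g om => if A g == j then X (i, g) om else 0) g om).
  by apply: funext => om; rewrite big_mkcond.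
apply: measurable_sum => g; case: (A g == j); [exact: hX|exact: measurable_cst].
Qed.

Lemma mtotal (m : nat) (X : 'I_2 * 'I_m -> Omega -> R)
  (hX : forall k, measurable_fun setT (X k)) i :
  measurable_fun setT (fun om => total_util (fun i g => X (i, g) om) i).
Proof. by apply: measurable_sum => g; exact: hX. Qed.

Lemma exists_ffun (m : nat) (Q : ('I_m -> 'I_2) -> Prop) :
  (exists A : 'I_m -> 'I_2, Q A) <-> (exists A : {ffun 'I_m -> 'I_2}, Q A).
Proof.
split=> [[A H]|[A H]]; last by exists A.
exists (finfun A); suff -> : (fun_of_fin (finfun A)) = A by [].
by apply: funext => g; rewrite ffunE.
Qed.

Lemma mWEF (m : nat) (X : 'I_2 * 'I_m -> Omega -> R) (w : 'I_2 -> R)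
  (hX : forall k, measurable_fun setT (X k)) :
  measurable [set om | exists A : 'I_m -> 'I_2, WEF w (fun i g => X (i, g) om) A].
Proof.
have -> : [set om | exists A : 'I_m -> 'I_2, WEF w (fun i g => X (i, g) om) A] =
  [set om | exists A : {ffun 'I_m -> 'I_2}, WEF w (fun i g => X (i, g) om) A].
  by apply/seteqP; split=> om /=; rewrite exists_ffun.
apply: mexists => A; apply: mforall => i; apply: mforall => j.
apply: mle; apply: measurable_funM; (try exact: measurable_cst); exact: mbundle.
Qed.

Lemma mWPROP (m : nat) (X : 'I_2 * 'I_m -> Omega -> R) (w : 'I_2 -> R)
  (hX : forall k, measurable_fun setT (X k)) :
  measurable [set om | exists A : 'I_m -> 'I_2, WPROP w (fun i g => X (i, g) om) A].
Proof.
have -> : [set om | exists A : 'I_m -> 'I_2, WPROP w (fun i g => X (i, g) om) A] =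
  [set om | exists A : {ffun 'I_m -> 'I_2}, WPROP w (fun i g => X (i, g) om) A].
  by apply/seteqP; split=> om /=; rewrite exists_ffun.
apply: mexists => A; apply: mforall => i.
apply: mle; last exact: mbundle.
apply: measurable_funM; [exact: measurable_cst|exact: mtotal].
Qed.

End Meas.

Lemma cover_bound (R : realType) (alpha beta : R) (d : measure_display)
  (Omega : measurableType d) (P : probability Omega R) (m : nat) (f : R -> R)
  (X : 'I_2 * 'I_m -> Omega -> R) (c : R) (S : set Omega) :
  (0 < m)%N -> 0 < alpha -> 0 <= c -> pdf_bounded alpha beta f ->
  (forall k, measurable_fun setT (X k)) ->
  (forall k, has_density P (X k) f) -> measurable S ->
  (forall om, S om -> exists k, X k om <= c \/ 1 < X k om) ->
  (P S <= ((2 * m)%:R * (beta * c))%:E)%E.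
Proof.
move=> m0 a0 c0 pf mX hd mS cov.
pose g0 : 'I_m := Ordinal m0.
pose e := enum {: 'I_2 * 'I_m}.
pose n := #|{: 'I_2 * 'I_m}|.
pose B := [set` `]-oo, c]] `|` [set` `]1%R, +oo[] : set R.
have mB : measurable B by apply: measurableU; apply: measurable_itv.
pose F k := X (nth (ord0, g0) e k) @^-1` B.
have mF k : measurable (F k).
  by rewrite /F -[X in measurable X]setTI; apply: (mX _ measurableT).
apply: (@le_trans _ _ (\sum_(k < n) P (F k))%E).
  apply: content_subadditive => //. all: try (move=> k _; exact: mF).
  move=> om Som; rewrite -bigcup_mkord; have [k hk] := cov om Som.
  exists (index k e); first by rewrite /= /n cardE index_mem mem_enum.
  rewrite /F /= nth_index ?mem_enum //.
  by case: hk => hk; [left|right]; rewrite /= in_itv /= ?hk.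
apply: (@le_trans _ _ (\sum_(k < n) (beta * c)%:E)%E).
  by apply: lee_sum => k _; exact: (dens_bound a0 c0 pf (hd _)).
rewrite (sumEFin _ _ (fun _ => beta * c)) big_const_ord iter_addr_0.
by rewrite lee_fin /n card_prod !card_ord mulr_natl.
Qed.

Unset Implicit Arguments. Set Strict Implicit.

Theorem theorem5 (R : realType) (alpha beta : R) :
  0 < alpha -> 0 < beta ->
  exists C : R, 0 < C /\
  forall (d : measure_display) (Omega : measurableType d)
         (P : probability Omega R) (m : nat) (f : R -> R)
         (X : 'I_2 * 'I_m -> Omega -> R) (w : 'I_2 -> R),
    (0 < m)%N ->
    pdf_bounded alpha beta f ->
    (forall k, measurable_fun setT (X k)) ->
    (forall k, has_density P (X k) f) ->
    mutually_independent P X ->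
    (forall i, 0 < w i) ->
    1 <= w (lift ord0 ord0) / w ord0 ->
    let r := w (lift ord0 ord0) / w ord0 in
    (P [set om | exists A : 'I_m -> 'I_2,
                   WEF w (fun i g => X (i, g) om) A]
       <= (C * (m%:R ^+ 2) / r)%:E)%E /\
    (P [set om | exists A : 'I_m -> 'I_2,
                   WPROP w (fun i g => X (i, g) om) A]
       <= (C * (m%:R ^+ 2) / r)%:E)%E.
Proof.
move=> a0 b0; exists (2 * beta); split; first by rewrite mulr_gt0.
move=> d Omega P m f X w m0 pf mX hd _ w0 r1 r.
have r0 : 0 < r by apply: lt_le_trans r1.
pose c := m%:R / r.
have c0 : 0 <= c by rewrite /c divr_ge0 // ltW.
have wa := w0 ord0; have wb := w0 (lift ord0 ord0).
have hc : c * w (lift ord0 ord0) = m%:R * w ord0.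
  rewrite /c /r mulrAC -mulrA mulrC invf_div mulrA mulrAC mulfV ?mul1r 1?mulrC //.
  by rewrite gt_eqF.
have bnd : ((2 * m)%:R * (beta * c))%:E = (2 * beta * (m%:R ^+ 2) / r)%:E.
  by congr EFin; rewrite /c natrM; ring.
have cov (S : set Omega) : measurable S ->
  (forall om, S om -> (forall i g, c < X (i, g) om <= 1) -> False) ->
  (P S <= (2 * beta * (m%:R ^+ 2) / r)%:E)%E.
  move=> mS HS; rewrite -bnd; apply: (cover_bound m0 a0 c0 pf mX hd mS).
  move=> om Som; apply: contrapT => H; apply: (HS om Som) => i g.
  have : ~ (X (i, g) om <= c \/ 1 < X (i, g) om) by move=> h; apply: H; exists (i, g).
  move/not_orP => [h1 h2]; apply/andP; split.
    by rewrite ltNge; apply/negP.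
  by rewrite leNgt; apply/negP.
split; apply: cov.
- exact: mWEF.
- by move=> om [A W] hu; apply: (key_wef m0 w0 c0 hc hu W).
- exact: mWPROP.
- by move=> om [A W] hu; apply: (key_wprop m0 w0 c0 hc hu W).
Qed.
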